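(* Let $(W,S)$ be a Coxeter system with $S$ finite, let $Q_W$ be its Coxeter quandle, let $\phi:\operatorname{Ad}(Q_W)\to W$ be the homomorphism $e_x\mapsto x$, and let $C_W=\ker\phi$. Let $\mathcal{R}_W\subseteq S$ be a complete set of representatives of the $W$-conjugacy classes of elements of $Q_W$, and let $c(W)$ be the number of such conjugacy classes. Then $C_W$ is the free abelian group with basis $\{e_s^2\mid s\in\mathcal{R}_W\}$. In particular $C_W\cong\mathbb{Z}^{c(W)}$.
   Context: A Coxeter system $(W,S)$: $S$ is a finite set, $m:S\times S\to\mathbb{N}\cup\{\infty\}$ satisfies $m(s,s)=1$ and $2\le m(s,t)=m(t,s)\le\infty$ for $s\neq t$, and $W=\langle s\in S\mid (st)^{m(s,t)}=1\ (m(s,t)<\infty)\rangle$. The Coxeter quandle is $Q_W=\bigcup_{w\in W}w^{-1}Sw$ (the set of reflections) with operation $x\ast y=y^{-1}xy=yxy$. The adjoint group of $Q_W$ is $\operatorname{Ad}(Q_W)=\langle e_x\ (x\in Q_W)\mid e_y^{-1}e_xe_y=e_{x\ast y}\ (x,y\in Q_W)\rangle$. The map $\phi:\operatorname{Ad}(Q_W)\to W$, $e_x\mapsto x$, is a well-defined surjective homomorphism. Every $W$-conjugacy class of $Q_W$ meets $S$, so $\mathcal{R}_W\subseteq S$ can be chosen. *)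

(* Defs.v *)
(* Groups given by presentations, modelled as setoids of
   words in the free monoid on generators and their formal inverses. *)
From mathcomp Require Import all_boot all_order all_algebra.
Set Implicit Arguments. Unset Strict Implicit. Unset Printing Implicit Defensive.

(* Words in the generators X: (x, false) = x, (x, true) = x^-1. *)
Definition word (X : Type) := seq (X * bool).

Definition winv (X : Type) (w : word X) : word X :=
  rev (map (fun p => (p.1, ~~ p.2)) w).

Inductive pres_eq (X : Type) (R : word X -> Prop) : word X -> word X -> Prop :=
| pe_refl w : pres_eq R w w
| pe_sym u v : pres_eq R u v -> pres_eq R v u
| pe_trans u v w : pres_eq R u v -> pres_eq R v w -> pres_eq R u w
| pe_cancel u v x b : pres_eq R (u ++ (x, b) :: (x, ~~ b) :: v) (u ++ v)
| pe_rel u v r : R r -> pres_eq R (u ++ r ++ v) (u ++ v).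

Definition wpow (X : Type) (w : word X) (n : int) : word X :=
  match n with
  | Posz k => flatten (nseq k w)
  | Negz k => flatten (nseq k.+1 (winv w))
  end.

Unset Implicit Arguments.
Section Coxeter.
Variables (S : finType) (m : S -> S -> nat).
(* Convention: m s t = 0 encodes m(s,t) = infinity. *)

Definition cox_rel (r : word S) : Prop :=
  exists s t, m s t != 0%N /\
    r = flatten (nseq (m s t) [:: (s, false); (t, false)]).

Definition W_eq : word S -> word S -> Prop := pres_eq cox_rel.

Definition is_refl (x : word S) : Prop :=
  exists (s : S) (u : word S), W_eq x (winv u ++ [:: (s, false)] ++ u).

Definition QW : Type := {x : word S | is_refl x}.

Definition W_conj (x y : word S) : Prop :=
  exists u : word S, W_eq x (winv u ++ y ++ u).

(* Relators of Ad(Q_W): e_y^-1 e_x e_y = e_{x*y}, x*y = yxy. Since the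
   generator index z ranges over all words W-equal to yxy, generators
   e_z, e_z' with z =_W z' are identified (take x = y = z). *)
Definition ad_rel (r : word QW) : Prop :=
  exists x y z : QW, W_eq (sval z) (sval y ++ sval x ++ sval y) /\
    r = [:: (y, true); (x, false); (y, false); (z, true)].

Definition Ad_eq : word QW -> word QW -> Prop := pres_eq ad_rel.

Definition phi (w : word QW) : word S :=
  flatten (map (fun p => if p.2 then winv (sval p.1) else sval p.1) w).

Definition in_CW (w : word QW) : Prop := W_eq (phi w) [::].

Lemma gen_is_refl (s : S) : is_refl [:: (s, false)].
Proof. by exists s, [::]; apply: pe_refl. Qed.

Definition e_gen (s : S) : QW := exist _ [:: (s, false)] (gen_is_refl s).

Definition esq (s : S) : word QW := [:: (e_gen s, false); (e_gen s, false)].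

Definition esq_prod (R : {set S}) (n : S -> int) : word QW :=
  flatten [seq wpow (esq r) (n r) | r <- enum R].

End Coxeter.

(* Main.v *)
Require Import Defs.
From mathcomp Require Import all_boot all_order all_algebra.
From Stdlib Require Import Setoid Morphisms ClassicalEpsilon.
From mathcomp Require Import zify.
Set Implicit Arguments. Unset Strict Implicit. Unset Printing Implicit Defensive.

Lemma winv_cat (X : Type) (a b : word X) : winv (a ++ b) = winv b ++ winv a.
Proof. by rewrite /winv map_cat rev_cat. Qed.

Lemma winvK (X : Type) (a : word X) : winv (winv a) = a.
Proof.
rewrite /winv map_rev revK -map_comp.
by rewrite (eq_map (g := id)) ?map_id // => -[x b] /=; rewrite negbK.
Qed.

Lemma winv1 (X : Type) (x : X) b : winv [:: (x, b)] = [:: (x, ~~ b)].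
Proof. by []. Qed.

Section Gen.
Variables (X : Type) (R : word X -> Prop).
Local Notation pe := (pres_eq R).

Lemma pe_equiv : Equivalence pe.
Proof. split; [exact: pe_refl | exact: pe_sym | exact: pe_trans]. Qed.
#[local] Existing Instance pe_equiv.

Lemma pe_catl u a b : pe a b -> pe (u ++ a) (u ++ b).
Proof.
elim=> {a b} [w|a b _ IH|a b c _ IH1 _ IH2|a v x bb|a v r Hr].
- exact: pe_refl.
- exact: pe_sym.
- exact: pe_trans IH2.
- by rewrite !catA; apply: pe_cancel.
- by rewrite !catA -(catA _ r); apply: pe_rel.
Qed.

Lemma pe_catr v a b : pe a b -> pe (a ++ v) (b ++ v).
Proof.
elim=> {a b} [w|a b _ IH|a b c _ IH1 _ IH2|a u x bb|a u r Hr].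
- exact: pe_refl.
- exact: pe_sym.
- exact: pe_trans IH2.
- by rewrite -!catA /=; apply: pe_cancel.
- by rewrite -!catA; apply: pe_rel.
Qed.

#[local] Instance cat_proper : Proper (pe ==> pe ==> pe) (@cat (X * bool)).
Proof. move=> a b H c d H'. apply: pe_trans (pe_catr _ H) (pe_catl _ H'). Qed.

#[local] Instance cons_proper : Proper (eq ==> pe ==> pe) (@cons (X * bool)).
Proof. move=> x _ <- a b H. exact: (pe_catl [:: x] H). Qed.

Lemma pe_relE r : R r -> pe r [::].
Proof. by move=> Hr; have := pe_rel [::] [::] Hr; rewrite cats0. Qed.

Lemma pe_cancel1 x b : pe [:: (x, b); (x, ~~ b)] [::].
Proof. exact: (pe_cancel R [::] [::]). Qed.

Lemma pe_inv_r w : pe (w ++ winv w) [::].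
Proof.
elim: w => [|[x b] w IH]; first reflexivity.
have -> : winv ((x, b) :: w) = winv w ++ [:: (x, ~~ b)] by rewrite -cat1s winv_cat.
rewrite -cat1s -catA (catA w) IH /=.
exact: pe_cancel1.
Qed.

Lemma pe_inv_l w : pe (winv w ++ w) [::].
Proof. by have := pe_inv_r (winv w); rewrite winvK. Qed.

Lemma pe_winv a b : pe a b -> pe (winv a) (winv b).
Proof.
elim=> {a b} [w|a b _ IH|a b c _ IH1 _ IH2|u v x bb|u v r Hr].
- reflexivity.
- by symmetry.
- by rewrite IH1.
- rewrite !winv_cat.
  have -> : winv ((x, bb) :: (x, ~~ bb) :: v) = winv v ++ [:: (x, bb); (x, ~~ bb)].
    by rewrite -cat1s -(cat1s (x, ~~ bb)) !winv_cat !winv1 negbK -catA.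
  rewrite -catA /= (pe_cancel R (winv v) (winv u) x bb).
  reflexivity.
- rewrite !winv_cat.
  have -> : pe (winv r) [::].
    apply: pe_trans (pe_inv_l r). rewrite -{1}[winv r]cats0. apply: pe_catl.
    symmetry. exact: pe_relE.
  by rewrite cats0; reflexivity.
Qed.

#[local] Instance winv_proper : Proper (pe ==> pe) (@winv X).
Proof. move=> a b H; exact: pe_winv. Qed.

Lemma pe_moveR a b c : pe (a ++ b) c -> pe a (c ++ winv b).
Proof.
move=> H; rewrite -H -catA pe_inv_r cats0; reflexivity.
Qed.

Lemma pe_moveL a b c : pe (a ++ b) c -> pe b (winv a ++ c).
Proof.
move=> H; rewrite -H catA pe_inv_l; reflexivity.
Qed.

End Gen.

#[global] Existing Instance pe_equiv.
#[global] Existing Instance cat_proper.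
#[global] Existing Instance cons_proper.
#[global] Existing Instance winv_proper.

Lemma pe_mono (X : Type) (R1 R2 : word X -> Prop) :
  (forall r, R1 r -> R2 r) -> forall a b, pres_eq R1 a b -> pres_eq R2 a b.
Proof.
move=> H a b; elim=> {a b}.
- exact: pe_refl.
- by move=> *; apply: pe_sym.
- by move=> *; apply: pe_trans; eauto.
- by move=> *; apply: pe_cancel.
- by move=> u v r Hr; apply: pe_rel; apply: H.
Qed.
Import GRing.Theory.

Section Cox.
Variables (S : finType) (m : S -> S -> nat).
Hypothesis m_diag : forall s, m s s = 1%N.
Local Notation Weq := (pres_eq (cox_rel S m)).
Local Notation Ad := (pres_eq (ad_rel S m)).
Local Notation QW := (QW S m).

Lemma W_ss s : Weq [:: (s, false); (s, false)] [::].
Proof.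
apply: pe_relE; exists s, s; rewrite m_diag; split => //.
Qed.

Lemma W_inv1 s : Weq [:: (s, true)] [:: (s, false)].
Proof.
have H := pe_catl [:: (s, true)] (W_ss s); rewrite cats0 in H.
apply: pe_trans (pe_sym H) _.
exact: (pe_cancel _ [::] [:: (s, false)] s true).
Qed.

Lemma W_winv_refl y : is_refl S m y -> Weq (winv y) y.
Proof.
move=> [s [v Hv]]; rewrite /W_eq in Hv.
rewrite Hv !winv_cat winvK winv1 /= W_inv1 -catA; reflexivity.
Qed.

Lemma W_sq_refl y : is_refl S m y -> Weq (y ++ y) [::].
Proof.
move=> [s [v Hv]]; rewrite /W_eq in Hv.
rewrite Hv -!catA (catA v) pe_inv_r /=.
rewrite -[[:: _, _ & v]]/([:: (s, false); (s, false)] ++ v) W_ss /= pe_inv_l.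
reflexivity.
Qed.

Lemma refl_conj x u : is_refl S m x -> is_refl S m (winv u ++ x ++ u).
Proof.
move=> [s [v Hv]]; rewrite /W_eq in Hv.
exists s, (v ++ u); rewrite /W_eq Hv winv_cat -!catA; reflexivity.
Qed.

Lemma W_conj_step a b y rho : Weq a (y ++ b ++ y) -> is_refl S m y ->
  W_conj S m b rho -> W_conj S m a rho.
Proof.
move=> Ha Hy [u Hu]; rewrite /W_eq in Hu.
exists (u ++ y); rewrite /W_eq Ha Hu winv_cat (W_winv_refl Hy) -!catA.
reflexivity.
Qed.

Definition lphi (p : QW * bool) : word S :=
  if p.2 then winv (sval p.1) else sval p.1.

Lemma phi_cons p w : phi S m (p :: w) = lphi p ++ phi S m w.
Proof. by []. Qed.

Lemma phi_cat a b : phi S m (a ++ b) = phi S m a ++ phi S m b.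
Proof. by rewrite /phi map_cat flatten_cat. Qed.

Lemma phi_winv a : phi S m (winv a) = winv (phi S m a).
Proof.
elim: a => [|[x b] a IH] //.
rewrite -cat1s winv_cat !phi_cat IH winv_cat; congr (_ ++ _).
rewrite winv1 /phi /= !cats0.
by case: b => //=; rewrite winvK.
Qed.

Definition conjQ (x : QW) (u : word S) : QW :=
  exist _ (winv u ++ sval x ++ u) (refl_conj u (svalP x)).

Lemma Ad_ident (x y : QW) : Weq (sval x) (sval y) ->
  Ad [:: (x, false)] [:: (y, false)].
Proof.
move=> H.
have Hr : ad_rel S m [:: (x, true); (x, false); (x, false); (y, true)].
  exists x, x, y; split => //.
  rewrite /W_eq catA (W_sq_refl (svalP x)) /= H; reflexivity.
have := pe_relE Hr.
rewrite -[[:: (x, true); _; _; _]]/([::] ++ [:: (x, true), (x, false) & [:: (x, false); (y, true)]]).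
rewrite (pe_cancel _ [::] _ x true) /= => H2.
have := pe_moveR (a := [:: (x, false)]) (b := [:: (y, true)]) H2.
by rewrite winv1.
Qed.

Lemma step_conj (p : QW * bool) (x : QW) :
  Ad (winv [:: p] ++ [:: (x, false)] ++ [:: p]) [:: (conjQ x (lphi p), false)].
Proof.
case: p => y [].
- set z := conjQ x _.
  have Hr : ad_rel S m [:: (y, true); (z, false); (y, false); (x, true)].
    exists z, y, x; split => //.
    rewrite /W_eq /= /lphi /= winvK -catA catA (W_sq_refl (svalP y)) /=.
    rewrite (W_winv_refl (svalP y)) -catA (W_sq_refl (svalP y)) cats0.
    reflexivity.
  have H1 := pe_relE Hr.
  have H2 := pe_moveL (a := [:: (y, true)]) (b := [:: (z, false); (y, false); (x, true)]) H1.
  rewrite winv1 cats0 /= in H2.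
  have H3 := pe_moveR (a := [:: (z, false)]) (b := [:: (y, false); (x, true)]) H2.
  rewrite winv1 /=. symmetry. exact H3.
- set z := conjQ x _.
  have Hr : ad_rel S m [:: (y, true); (x, false); (y, false); (z, true)].
    exists x, y, z; split => //.
    rewrite /W_eq /= /lphi /= (W_winv_refl (svalP y)); reflexivity.
  have H1 := pe_relE Hr.
  have H2 := pe_moveR (a := [:: (y, true); (x, false); (y, false)]) (b := [:: (z, true)]) H1.
  rewrite winv1 /=. exact H2.
Qed.

Lemma conj_gen g (x : QW) :
  Ad (winv g ++ [:: (x, false)] ++ g) [:: (conjQ x (phi S m g), false)].
Proof.
elim: g x => [|p g IH] x.
  apply: Ad_ident => /=; rewrite cats0; reflexivity.
rewrite -cat1s winv_cat -!catA (catA (winv [:: p])) (catA _ _ g).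
rewrite -(catA (winv [:: p])) step_conj IH; apply: Ad_ident => /=.
rewrite phi_cons winv_cat -!catA; reflexivity.
Qed.

Definition in_cw (g : word QW) := Weq (phi S m g) [::].

Lemma cw_letter g (x : QW) : in_cw g ->
  Ad (g ++ [:: (x, false)]) ([:: (x, false)] ++ g).
Proof.
move=> Hg.
have H : Ad (winv g ++ ([:: (x, false)] ++ g)) [:: (x, false)].
  rewrite conj_gen; apply: Ad_ident => /=.
  rewrite Hg /= cats0; reflexivity.
have := pe_moveL H; rewrite winvK => H2; rewrite H2; reflexivity.
Qed.

Lemma cw_winv g : in_cw g -> in_cw (winv g).
Proof. by move=> H; rewrite /in_cw phi_winv H; reflexivity. Qed.

Lemma cw_cat a b : in_cw a -> in_cw b -> in_cw (a ++ b).
Proof. by move=> Ha Hb; rewrite /in_cw phi_cat Ha Hb; reflexivity. Qed.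

Lemma cw_central g h : in_cw g -> Ad (g ++ h) (h ++ g).
Proof.
move=> Hg; elim: h => [|[x b] h IH]; first by rewrite cats0; reflexivity.
rewrite -cat1s catA -(catA [:: (x, b)]) -IH catA.
suff -> : Ad (g ++ [:: (x, b)]) ([:: (x, b)] ++ g) by reflexivity.
case: b; last exact: cw_letter.
have := cw_letter x (cw_winv Hg).
move/pe_winv; rewrite !winv_cat winvK winv1 /= => H; symmetry; exact: H.
Qed.

Definition R2 (r : word QW) : Prop :=
  ad_rel S m r \/ exists x : QW, r = [:: (x, false); (x, false)].
Local Notation Qe := (pres_eq R2).

Lemma Ad_Q a b : Ad a b -> Qe a b.
Proof. apply: pe_mono => r Hr; by left. Qed.

Lemma Q_sq (x : QW) : Qe [:: (x, false); (x, false)] [::].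
Proof. apply: pe_relE; right; by exists x. Qed.

Lemma Q_inv (x : QW) : Qe [:: (x, true)] [:: (x, false)].
Proof.
have H := pe_catl [:: (x, true)] (Q_sq x); rewrite cats0 in H.
apply: pe_trans (pe_sym H) _.
exact: (pe_cancel _ [::] [:: (x, false)] x true).
Qed.

Definition psi (w : word S) : word QW := map (fun p => (e_gen S m p.1, p.2)) w.

Lemma psi_cat a b : psi (a ++ b) = psi a ++ psi b.
Proof. exact: map_cat. Qed.

Lemma psi_winv a : psi (winv a) = winv (psi a).
Proof. by rewrite /psi /winv map_rev -!map_comp. Qed.

Lemma phi_psi a : phi S m (psi a) = a.
Proof.
elim: a => [|[s b] a IH] //=.
rewrite phi_cons IH /lphi /=; by case: b.
Qed.

Fixpoint alt (s t : S) (n : nat) : word S :=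
  if n is n'.+1 then (s, false) :: alt t s n' else [::].

Lemma alt_rcons n s t :
  alt s t n.+1 = rcons (alt s t n) (if odd n then t else s, false).
Proof.
elim: n s t => [|n IH] s t; first by [].
rewrite -[alt s t n.+2]/((s, false) :: alt t s n.+1) IH /=; by case: (odd n).
Qed.

Lemma alt_flat k s t :
  flatten (nseq k [:: (s, false); (t, false)]) = alt s t k.*2.
Proof. by elim: k => [|k IH] //=; rewrite IH. Qed.

Lemma odd_alt k : forall s t, exists x : QW,
  Weq (sval x) (alt s t k.*2.+1) /\ Qe (psi (alt s t k.*2.+1)) [:: (x, false)].
Proof.
elim: k => [|k IH] s t.
  exists (e_gen S m s); split => /=; reflexivity.
have [x' [H1 H2]] := IH t s.
have E : alt s t (k.+1).*2.+1 = [:: (s, false)] ++ alt t s k.*2.+1 ++ [:: (s, false)].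
  rewrite -[alt s t _]/((s, false) :: alt t s (k.*2.+2)) alt_rcons /= odd_double.
  by rewrite -cats1.
rewrite E.
exists (conjQ x' (phi S m [:: (e_gen S m s, true)])); split.
  have HP : phi S m [:: (e_gen S m s, true)] = [:: (s, true)] by [].
  rewrite [sval _]/= HP H1 W_inv1; reflexivity.
rewrite !psi_cat H2.
set e := e_gen S m s.
have -> : psi [:: (s, false)] ++ [:: (x', false)] ++ psi [:: (s, false)] =
  winv [:: (e, true)] ++ [:: (x', false)] ++ [:: (e, false)] by [].
rewrite -(Q_inv e); apply: Ad_Q; exact: conj_gen.
Qed.

Lemma dihedral s t : m s t != 0%N ->
  Qe (psi (flatten (nseq (m s t) [:: (s, false); (t, false)]))) [::].
Proof.
move=> Hm; have Hrel : cox_rel S m (flatten (nseq (m s t) [:: (s, false); (t, false)])).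
  by exists s, t.
have HW := pe_relE Hrel.
move: Hm HW; case: (m s t) => [|k] // _.
have Ho : odd k.*2.+1 = true by rewrite /= odd_double.
rewrite alt_flat -[alt s t _]/(alt s t (k.*2.+1).+1) alt_rcons Ho -cats1 => HW.
have [x [H1 H2]] := odd_alt k s t.
rewrite psi_cat H2.
have Hx : Weq (sval x) [:: (t, false)].
  rewrite H1; have := pe_moveR HW; rewrite /= winv1 W_inv1 => ->; reflexivity.
rewrite (Ad_Q (Ad_ident (y := e_gen S m t) Hx)) /=.
exact: Q_sq.
Qed.

Lemma psi_Weq a b : Weq a b -> Qe (psi a) (psi b).
Proof.
elim=> {a b}.
- move=> w; reflexivity.
- by move=> a b _ IH; symmetry.
- by move=> a b c _ IH1 _ IH2; rewrite IH1.
- move=> u v x b; rewrite !psi_cat /=; exact: pe_cancel.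
- move=> u v r [s [t [Hm ->]]]; rewrite !psi_cat dihedral //=; reflexivity.
Qed.

Lemma gen_Q (x : QW) : Qe [:: (x, false)] (psi (sval x)).
Proof.
have [s [v Hv]] := svalP x; rewrite /W_eq in Hv.
rewrite (psi_Weq Hv) !psi_cat psi_winv /=.
rewrite (Ad_Q (conj_gen (psi v) (e_gen S m s))).
symmetry; apply: Ad_Q; apply: Ad_ident => /=.
rewrite phi_psi Hv; reflexivity.
Qed.

Lemma word_Q c : Qe c (psi (phi S m c)).
Proof.
elim: c => [|[x b] c IH]; first reflexivity.
rewrite phi_cons psi_cat -IH -cat1s; apply: pe_catr.
case: b; last exact: gen_Q.
rewrite /lphi /= psi_winv.
have H := pe_winv (gen_Q x); rewrite winv1 in H; exact: H.
Qed.

Lemma cw_Q c : in_cw c -> Qe c [::].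
Proof. move=> H; apply: pe_trans (word_Q c) _; rewrite (psi_Weq H); reflexivity. Qed.

Section Wpow.
Variable w : word QW.
Local Notation P k := (flatten (nseq k w)).
Local Notation N k := (flatten (nseq k (winv w))).

Lemma P_add a b : P (a + b) = P a ++ P b.
Proof. by rewrite nseqD flatten_cat. Qed.

Lemma N_add a b : N (a + b) = N a ++ N b.
Proof. by rewrite nseqD flatten_cat. Qed.

Lemma winv_P k : winv (P k) = N k.
Proof.
elim: k => [|k IH] //.
rewrite -[in LHS]addn1 P_add winv_cat IH /= cats0.
by [].
Qed.

Lemma mix a b : let k := (Posz a - Posz b)%R in
  (Ad (P a ++ N b) (wpow w k)) /\ (Ad (N b ++ P a) (wpow w k)).
Proof.
move=> k; case: (leqP b a) => Hab.
- have [c Hc] : exists c, a = (b + c)%N by exists (a - b)%N; lia.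
  have -> : k = Posz c by rewrite /k; lia.
  rewrite Hc P_add -winv_P /=; split.
    rewrite -P_add addnC P_add -catA pe_inv_r cats0; reflexivity.
  rewrite catA pe_inv_l; reflexivity.
- have [c Hc] : exists c, b = (a + c.+1)%N by exists (b - a.+1)%N; lia.
  have -> : k = Negz c by rewrite /k NegzE; lia.
  rewrite Hc; split.
    rewrite N_add -winv_P catA pe_inv_r; reflexivity.
  rewrite addnC N_add -catA -[N a]winv_P pe_inv_l cats0; reflexivity.
Qed.

Lemma wpow_add (a b : int) : Ad (wpow w a ++ wpow w b) (wpow w (a + b)%R).
Proof.
case: a => a; case: b => b /=.
- by rewrite -P_add; reflexivity.
- have -> : (Posz a + Negz b)%R = (Posz a - Posz b.+1)%R by rewrite NegzE.
  exact: (mix a b.+1).1.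
- have -> : (Negz a + Posz b)%R = (Posz b - Posz a.+1)%R by rewrite NegzE; lia.
  exact: (mix b a.+1).2.
- rewrite -[(winv w ++ N a)]/(N a.+1) -[winv w ++ N b]/(N b.+1) -N_add addSn addnS.
  reflexivity.
Qed.

End Wpow.

Lemma cw_esq r : in_cw (esq S m r).
Proof. rewrite /in_cw /=; exact: W_ss. Qed.

Lemma cw_nil : in_cw [::].
Proof. rewrite /in_cw; reflexivity. Qed.

Lemma cw_nseq w k : in_cw w -> in_cw (flatten (nseq k w)).
Proof. move=> Hw; elim: k => [|k IH] /=; [exact: cw_nil | exact: cw_cat]. Qed.

Lemma cw_wpow w k : in_cw w -> in_cw (wpow w k).
Proof.
move=> Hw; case: k => k /=; first exact: cw_nseq.
apply: cw_cat; [exact: cw_winv | exact: cw_nseq (cw_winv Hw)].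
Qed.

Definition Fl (l : seq S) (n : S -> int) : word QW :=
  flatten [seq wpow (esq S m r) (n r) | r <- l].

Lemma cw_Fl l n : in_cw (Fl l n).
Proof.
elim: l => [|r l IH]; first exact: cw_nil.
exact: cw_cat (cw_wpow _ (cw_esq r)) IH.
Qed.

Lemma Fl_add l n1 n2 n3 : (forall r, n3 r = n1 r + n2 r)%R ->
  Ad (Fl l n1 ++ Fl l n2) (Fl l n3).
Proof.
move=> H; elim: l => [|r l IH]; first reflexivity.
rewrite /Fl /= -/(Fl l n1) -/(Fl l n2) -/(Fl l n3).
rewrite -catA (catA (Fl l n1)) (cw_central _ (cw_Fl l n1)) -catA IH catA.
rewrite wpow_add H; reflexivity.
Qed.

Lemma Fl_zero l n : (forall r, n r = 0%R) -> Fl l n = [::].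
Proof. by move=> H; elim: l => [|r l IH] //; rewrite /Fl /= H /= -/(Fl l n) IH. Qed.

Definition delta (r : S) : S -> int := fun r' => if r' == r then 1%R else 0%R.

Lemma Fl_delta r l : uniq l -> Fl l (delta r) = if r \in l then esq S m r else [::].
Proof.
elim: l => [|a l IH] //= /andP [Ha Hu].
rewrite /Fl /= -/(Fl _ _) IH // in_cons /delta.
case: (eqVneq a r) => [<-|Hne] /=.
  by rewrite (negbTE Ha) /=.
by [].
Qed.

Lemma conj_central g a : in_cw a -> Ad (winv g ++ a ++ g) a.
Proof.
move=> Ha; rewrite catA -(cw_central (winv g) Ha) -catA pe_inv_l cats0; reflexivity.
Qed.

Lemma conj_mul g a b : Ad ((winv g ++ a ++ g) ++ (winv g ++ b ++ g)) (winv g ++ (a ++ b) ++ g).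
Proof.
rewrite -!catA (catA g (winv g)) pe_inv_r /=; reflexivity.
Qed.

Variable Rs : {set S}.
Hypothesis R_cover : forall x : word S, is_refl S m x ->
     exists2 r, r \in Rs & W_conj S m x [:: (r, false)].
Hypothesis R_distinct : forall r r', r \in Rs -> r' \in Rs ->
     W_conj S m [:: (r, false)] [:: (r', false)] -> r = r'.

Local Notation E n := (esq_prod S m Rs n).

Lemma sq_esq (x : QW) : exists2 r, r \in Rs & Ad [:: (x, false); (x, false)] (esq S m r).
Proof.
have [r Hr [u Hu]] := R_cover (svalP x); rewrite /W_eq in Hu.
exists r => //.
have Hx : Ad [:: (x, false)] (winv (psi u) ++ [:: (e_gen S m r, false)] ++ psi u).
  rewrite conj_gen; apply: Ad_ident => /=; rewrite phi_psi Hu; reflexivity.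
rewrite -[[:: (x, false); (x, false)]]/([:: (x, false)] ++ [:: (x, false)]) Hx.
rewrite conj_mul conj_central //; [reflexivity | exact: cw_esq].
Qed.

Lemma esq_E r : r \in Rs -> esq S m r = E (delta r).
Proof. by move=> Hr; rewrite /esq_prod -/(Fl _ _) Fl_delta ?enum_uniq // mem_enum Hr. Qed.

Lemma E_add n1 n2 n3 : (forall r, n3 r = n1 r + n2 r)%R -> Ad (E n1 ++ E n2) (E n3).
Proof. exact: Fl_add. Qed.

Lemma E_zero n : (forall r, n r = 0%R) -> E n = [::].
Proof. exact: Fl_zero. Qed.

Lemma cw_E n : in_cw (E n).
Proof. exact: cw_Fl. Qed.

Lemma transfer c d : Qe c d -> exists n, Ad c (d ++ E n).
Proof.
elim=> {c d}.
- move=> w; exists (fun _ => 0%R); rewrite E_zero // cats0; reflexivity.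
- move=> a b _ [n H]; exists (fun r => - n r)%R.
  rewrite H -catA (E_add (n3 := fun _ => 0%R)); last by move=> r; rewrite addrN.
  rewrite E_zero // cats0; reflexivity.
- move=> a b c _ [n1 H1] _ [n2 H2]; exists (fun r => n2 r + n1 r)%R.
  rewrite H1 H2 -catA E_add //; reflexivity.
- move=> u v x b; exists (fun _ => 0%R); rewrite E_zero // cats0; exact: pe_cancel.
- move=> u v r [Hr|[x ->]].
    exists (fun _ => 0%R); rewrite E_zero // cats0; exact: pe_rel.
  have [rr Hrr Hx] := sq_esq x.
  exists (delta rr); rewrite Hx (esq_E Hrr) (cw_central _ (cw_E _)) -catA; reflexivity.
Qed.

Definition iota (x : QW) (r : S) : int :=
  if excluded_middle_informative (W_conj S m (sval x) [:: (r, false)]) then 1%R else 0%R.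

Definition kap (r : S) (w : word QW) : int :=
  \sum_(p <- w) (if p.2 then - iota p.1 r else iota p.1 r)%R.

Lemma kap_cat r a b : kap r (a ++ b) = (kap r a + kap r b)%R.
Proof. by rewrite /kap big_cat. Qed.

Lemma kap_cons r p a : kap r (p :: a) = ((if p.2 then - iota p.1 r else iota p.1 r) + kap r a)%R.
Proof. by rewrite /kap big_cons. Qed.

Lemma kap_nil r : kap r [::] = 0%R.
Proof. by rewrite /kap big_nil. Qed.

Lemma iota_rel (x y z : QW) r : Weq (sval z) (sval y ++ sval x ++ sval y) ->
  iota x r = iota z r.
Proof.
move=> Hz.
have Hx : Weq (sval x) (sval y ++ sval z ++ sval y).
  rewrite Hz -!catA (catA (sval y) (sval y)) (W_sq_refl (svalP y)) /= cats0.
  reflexivity.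
rewrite /iota.
case: excluded_middle_informative => H1; case: excluded_middle_informative => H2 //.
- by case: H2; apply: W_conj_step Hz (svalP y) H1.
- by case: H1; apply: W_conj_step Hx (svalP y) H2.
Qed.

Lemma kap_inv r a b : Ad a b -> kap r a = kap r b.
Proof.
elim=> {a b}.
- by [].
- by move=> a b _ ->.
- by move=> a b c _ -> _ ->.
- move=> u v x b; rewrite !kap_cat !kap_cons /=; case: b => /=; lia.
- move=> u v rl [x [y [z [Hz ->]]]].
  rewrite !kap_cat !kap_cons kap_nil /= (iota_rel r Hz); lia.
Qed.

Lemma kap_winv r w : kap r (winv w) = (- kap r w)%R.
Proof.
elim: w => [|[x b] w IH]; first by rewrite kap_nil oppr0.
rewrite -cat1s winv_cat kap_cat IH winv1 kap_cat !kap_cons !kap_nil /=.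
case: b => /=; lia.
Qed.

Lemma kap_nseq r w k : kap r (flatten (nseq k w)) = (Posz k * kap r w)%R.
Proof.
elim: k => [|k IH] /=; first by rewrite kap_nil mul0r.
rewrite kap_cat IH; nia.
Qed.

Lemma kap_wpow r w k : kap r (wpow w k) = (k * kap r w)%R.
Proof.
case: k => k /=; first exact: kap_nseq.
rewrite kap_cat kap_nseq kap_winv NegzE; nia.
Qed.

Lemma iota_gen r r' : r \in Rs -> r' \in Rs ->
  iota (e_gen S m r') r = if r' == r then 1%R else 0%R.
Proof.
move=> Hr Hr'; rewrite /iota; case: excluded_middle_informative => H /=.
  by rewrite (R_distinct Hr' Hr H) eqxx.
case: eqVneq => // E'; subst; case: H; exists [::] => /=; reflexivity.
Qed.

Lemma kap_Fl r l n : r \in Rs -> uniq l -> {subset l <= Rs} ->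
  kap r (Fl l n) = if r \in l then (2 * n r)%R else 0%R.
Proof.
move=> Hr; elim: l => [|a l IH] /=; first by rewrite kap_nil.
move=> /andP [Ha Hu] Hsub.
rewrite /Fl /= -/(Fl _ _) kap_cat IH //; last by move=> y Hy; apply: Hsub; rewrite in_cons Hy orbT.
rewrite kap_wpow !kap_cons kap_nil /= iota_gen //; last by apply: Hsub; rewrite in_cons eqxx.
rewrite in_cons; case: (eqVneq a r) => [E'|Hne] /=.
  by subst; rewrite (negbTE Ha); lia.
case: (r \in l); lia.
Qed.

Lemma indep n : Ad (E n) [::] -> forall r, r \in Rs -> n r = 0%R.
Proof.
move=> H r Hr.
have := kap_inv r H; rewrite kap_nil /esq_prod -/(Fl _ _) kap_Fl ?enum_uniq //.
  rewrite mem_enum Hr; lia.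
by move=> y; rewrite mem_enum.
Qed.

End Cox.

Theorem theorem3p1 (S : finType) (m : S -> S -> nat)
  (m_diag : forall s, m s s = 1%N)
  (m_sym : forall s t, m s t = m t s)
  (m_off : forall s t, s != t -> m s t != 1%N)
  (R : {set S})
  (R_cover : forall x : word S, is_refl S m x ->
     exists2 r, r \in R & W_conj S m x [:: (r, false)])
  (R_distinct : forall r r', r \in R -> r' \in R ->
     W_conj S m [:: (r, false)] [:: (r', false)] -> r = r') :
  (* the e_r^2 lie in C_W *)
  (forall r, r \in R -> in_CW S m (esq S m r)) /\
  (* C_W is abelian *)
  (forall c d, in_CW S m c -> in_CW S m d -> Ad_eq S m (c ++ d) (d ++ c)) /\
  (* the e_r^2 (r in R) generate C_W *)
  (forall c, in_CW S m c -> exists n : S -> int, Ad_eq S m c (esq_prod S m R n)) /\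
  (* and are Z-linearly independent *)
  (forall n : S -> int, Ad_eq S m (esq_prod S m R n) [::] ->
     forall r, r \in R -> n r = 0%R).
Proof.
split; first by move=> r _; exact: (cw_esq m_diag).
split; first by move=> c d Hc _; exact: (cw_central m_diag).
split.
  move=> c Hc.
  have [n Hn] := transfer m_diag R_cover (cw_Q m_diag Hc).
  by exists n.
move=> n H r Hr; exact: (indep m_diag R_distinct H Hr).
Qed.
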